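(* Let $R=k[x_1,\ldots,x_n]$ and let $(h_0,h_1,\ldots,h_s)$ be the $h$-vector of a graded Artinian level algebra $A=R/I$ with socle degree $s$. Suppose that $h_{d-1}>h_d$ for some $d\geq r_1(A)$. Then (a) $h_{d-1}>h_d>\cdots>h_{s-1}>h_s>0$, and (b) $h_{t-1}-h_t\leq (n-1)(h_t-h_{t+1})$ for all $d\le t\le s$ (where $h_{s+1}=0$).
   Context: $k$ is an infinite field of characteristic $0$. $h_i=\dim_k A_i$, and $s$ is the largest degree with $A_s\ne0$ (the socle degree). The socle of $A$ is $\{a\in A: a\mathfrak m=0\}$ with $\mathfrak m$ the maximal homogeneous ideal; $A$ is level if its socle is concentrated in a single degree. The reduction number $r_1(A)=\min\{\ell:(R/(I+(L)))_{\ell+1}=0\}$ for a general linear form $L$ (equivalently $\min\{\ell: x_{n-1}^{\ell+1}\in\mathrm{Gin}(I)\}$, $\mathrm{Gin}$ taken with respect to degree reverse lexicographic order). *)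

(* Defs.v *)
From HB Require Import structures.
From mathcomp Require Import all_boot all_order all_algebra.
From mathcomp Require Import mpoly.

Set Implicit Arguments.
Unset Strict Implicit.
Unset Printing Implicit Defensive.

Import Order.TTheory GRing.Theory.
Local Open Scope ring_scope.

Section Graded.
Variables (k : fieldType) (n : nat).
Implicit Types (I : pred {mpoly k[n]}) (p f g q L : {mpoly k[n]}).

Definition hcomp (d : nat) p : {mpoly k[n]} :=
  \sum_(m <- msupp p | mdeg m == d) p@_m *: 'X_[m].

Definition homog_ideal I : Prop :=
  [/\ 0 \in I,
      (forall f g, f \in I -> g \in I -> f + g \in I),
      (forall f g, g \in I -> f * g \in I) &
      (forall f d, f \in I -> hcomp d f \in I)].

Definition indep_mod I m (t : m.-tuple {mpoly k[n]}) : Prop :=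
  forall c : 'I_m -> k, \sum_(i < m) c i *: tnth t i \in I -> forall i, c i = 0.

(* hdim I i h  :<=>  dim_k (R/I)_i = h, i.e. h is the maximal number of
   degree-i homogeneous forms that are linearly independent modulo I. *)
Definition hdim I (i h : nat) : Prop :=
  (exists t : h.-tuple {mpoly k[n]},
      (forall j, tnth t j \is i.-homog) /\ indep_mod I t) /\
  (forall m (t : m.-tuple {mpoly k[n]}),
      (forall j, tnth t j \is i.-homog) -> indep_mod I t -> (m <= h)%N).

(* A = R/I is level with socle degree s: the socle
   {a in A | a * m = 0} is contained in A_s, i.e. for every f with
   x_j f in I for all j, all homogeneous components of f of degree
   different from s lie in I. *)
Definition level_socle I (s : nat) : Prop :=
  forall f, (forall j : 'I_n, 'X_j * f \in I) ->
    forall d, d != s -> hcomp d f \in I.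

(* (R/(I+(L)))_e = 0 *)
Definition quot_lin_vanish I L (e : nat) : Prop :=
  forall f, f \is e.-homog -> exists g q, g \in I /\ f = g + L * q.

Definition linform (c : 'I_n -> k) : {mpoly k[n]} := \sum_(i < n) c i *: 'X_i.

Definition red_num_of I L (l : nat) : Prop :=
  quot_lin_vanish I L l.+1 /\ forall l', (l' < l)%N -> ~ quot_lin_vanish I L l'.+1.

(* r_1(A) = r : for a general linear form L (i.e. all L = sum c_i x_i with
   coefficient vector c outside the zero set of some nonzero polynomial P,
   a nonempty Zariski-open set), min{l : (R/(I+(L)))_(l+1) = 0} = r. *)
Definition is_r1 I (r : nat) : Prop :=
  exists P : {mpoly k[n]}, P != 0 /\
    forall c : 'I_n -> k, P.@[c] != 0 ->
      red_num_of I (linform c) r.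

End Graded.

(* Main.v *)
Require Import Defs.
From HB Require Import structures.
From mathcomp Require Import all_boot all_order all_algebra.
From mathcomp Require Import mpoly.
From mathcomp Require Import zify.
From Stdlib Require Import ClassicalEpsilon Classical.
Import Order.TTheory GRing.Theory.
Local Open Scope ring_scope.
Section Ideal.
Context {k : fieldType} {n : nat} {I : pred {mpoly k[n]}}.
Hypothesis hI : homog_ideal I.

Lemma I0 : 0 \in I. Proof. by case: hI. Qed.
Lemma ID {f g} : f \in I -> g \in I -> f + g \in I.
Proof. by case: hI => _ H _ _; apply: H. Qed.
Lemma IM {f g} : g \in I -> f * g \in I.
Proof. by case: hI => _ _ H _; apply: H. Qed.
Lemma IZ {c g} : g \in I -> c *: g \in I.
Proof. by move=> Hg; rewrite -mul_mpolyC; apply: IM. Qed.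
Lemma IN {g} : g \in I -> - g \in I.
Proof. by move=> Hg; rewrite -scaleN1r; apply: IZ. Qed.
Lemma IB {f g} : f \in I -> g \in I -> f - g \in I.
Proof. by move=> Hf Hg; apply: ID => //; apply: IN. Qed.
Lemma Isum {J : Type} (r : seq J) (P : pred J) (F : J -> {mpoly k[n]}) :
  (forall i, P i -> F i \in I) -> \sum_(i <- r | P i) F i \in I.
Proof. move=> H; elim/big_rec: _ => [|i x Pi Hx]; [exact: I0 | exact: ID (H i Pi) Hx]. Qed.
Lemma Ihcomp {d f} : f \in I -> hcomp d f \in I.
Proof. by case: hI => _ _ _ H; apply: (H f d). Qed.

End Ideal.

Section Homog.
Context {k : fieldType} {n : nat}.

Lemma hcomp_homog {d} {f : {mpoly k[n]}} : f \is d.-homog -> hcomp d f = f.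
Proof. exact: pihomog_dE. Qed.

Lemma hcomp_lin d : linear (hcomp (k:=k) (n:=n) d).
Proof. exact: pihomog_is_linear. Qed.

Lemma hcompD d (f g : {mpoly k[n]}) : hcomp d (f + g) = hcomp d f + hcomp d g.
Proof. exact: pihomogD. Qed.

Lemma hcomp_mulX d (i : 'I_n) (q : {mpoly k[n]}) :
  hcomp d.+1 ('X_i * q) = 'X_i * hcomp d q.
Proof.
rewrite [q]mpolyE mulr_sumr.
rewrite /hcomp -/(pihomog mdeg d.+1 _) -/(pihomog mdeg d _).
rewrite !raddf_sum /= mulr_sumr; apply: eq_bigr => m _.
rewrite -scalerAr !linearZ /= -scalerAr; congr (_ *: _).
rewrite -mpolyXD !pihomogX [X in X == d.+1]/= mdegD mdeg1 add1n eqSS.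
by case: (_ == d); rewrite ?mulr0 ?mpolyXD.
Qed.

Lemma hcomp_mul_lin d (c : 'I_n -> k) (q : {mpoly k[n]}) :
  hcomp d.+1 (linform c * q) = linform c * hcomp d q.
Proof.
rewrite /linform !mulr_suml /hcomp -/(pihomog mdeg d.+1 _) raddf_sum /=.
apply: eq_bigr => i _; rewrite -!scalerAl linearZ /=.
by congr (_ *: _); apply: hcomp_mulX.
Qed.

Lemma linform_homog (c : 'I_n -> k) : linform c \is 1.-homog.
Proof.
apply: rpred_sum => i _; apply: rpredZ.
by rewrite dhomogX /= mdeg1.
Qed.

End Homog.

Section Vanish.
Variables (k : fieldType) (n : nat) (I : pred {mpoly k[n]}).
Hypothesis hI : homog_ideal I.
Variable c : 'I_n -> k.
Local Notation L := (linform c).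

Definition vanH e := forall f : {mpoly k[n]}, f \is e.+1.-homog ->
  exists g q, g \in I /\ q \is e.-homog /\ f = g + L * q.

Lemma vanH_base e : quot_lin_vanish I L e.+1 -> vanH e.
Proof.
move=> H f Hf; have [g [q [Hg Ef]]] := H f Hf.
exists (hcomp e.+1 g), (hcomp e q); split; first exact: Ihcomp.
split; first exact: pihomogP.
by rewrite -hcomp_mul_lin -hcompD -Ef hcomp_homog.
Qed.

Lemma monom_split (m : 'X_{1..n}) e : mdeg m = e.+1 ->
  exists i : 'I_n, exists m', m = (U_(i) + m')%MM /\ mdeg m' = e.
Proof.
move=> Hm.
have [/existsP [i Hi]|Hn] := boolP [exists i : 'I_n, 0 < m i]%N.
  exists i, (m - U_(i))%MM.
  have Hle : (U_(i) <= m)%MM.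
    by apply/mnm_lepP => j; rewrite mnm1E; case: eqP => // <-.
  have E : m = (U_(i) + (m - U_(i)))%MM by rewrite addmC submK.
  split=> //; move: Hm; rewrite {1}E mdegD mdeg1 add1n; case.
  by [].
exfalso; have : m = 0%MM.
  apply/mnmP => j; rewrite mnm0E; apply/eqP; rewrite eqn0Ngt.
  by apply: contra Hn => Hj; apply/existsP; exists j.
by move=> E; move: Hm; rewrite E mdeg0.
Qed.

Lemma vanH_step e : vanH e -> vanH e.+1.
Proof.
move=> H f Hf; rewrite [f]mpolyE.
elim/big_rec: _ => [|m p _ [g [q [Hg [Hq Ep]]]]].
  by exists 0, 0; split; [exact: I0 | split; [exact: rpred0 | rewrite mulr0 addr0]].
case: (boolP (m \in msupp f)) => Hm; last first.
  by exists g, q; split=> //; split=> //; move: Hm; rewrite -mcoeff_eq0 => /eqP ->;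
    rewrite scale0r add0r.
have Hdm : mdeg m = e.+2 by move/dhomogP: Hf => /(_ m Hm).
have [i [m' [Em Hm']]] := monom_split _ _ Hdm.
have [g0 [q0 [Hg0 [Hq0 E0]]]] : exists g0 q0, g0 \in I /\ q0 \is e.-homog /\
    'X_[m'] = g0 + L * q0.
  by apply: H; rewrite dhomogX /= Hm'.
exists (f@_m *: ('X_i * g0) + g), (f@_m *: ('X_i * q0) + q); split.
  by apply: ID => //; apply: IZ => //; apply: IM.
split.
  apply: rpredD => //; apply: rpredZ.
  have HX : ('X_i : {mpoly k[n]}) \is 1.-homog by rewrite dhomogX /= mdeg1.
  by have := dhomogM HX Hq0; rewrite add1n.
rewrite Ep Em mpolyXD E0 mulrDr mulrDr scalerDr.
by rewrite mulrCA -scalerAr addrACA.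
Qed.

Lemma vanH_up e e' : vanH e -> (e <= e')%N -> vanH e'.
Proof.
move=> H; elim: e' => [|e' IH]; first by rewrite leqn0 => /eqP <-.
rewrite leq_eqVlt => /orP [/eqP <- //|]; rewrite ltnS => /IH; exact: vanH_step.
Qed.

End Vanish.


Section Coord.
Variables (k : fieldType) (n : nat) (I : pred {mpoly k[n]}).
Hypothesis hI : homog_ideal I.
Variable h : nat -> nat.
Hypothesis hh : forall i, hdim I i (h i).

Definition Bt j : (h j).-tuple {mpoly k[n]} :=
  proj1_sig (constructive_indefinite_description _ (proj1 (hh j))).

Lemma Bt_homog j a : tnth (Bt j) a \is j.-homog.
Proof. exact: (proj1 (proj2_sig (constructive_indefinite_description _ (proj1 (hh j))))). Qed.

Lemma Bt_indep j : indep_mod I (Bt j).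
Proof. exact: (proj2 (proj2_sig (constructive_indefinite_description _ (proj1 (hh j))))). Qed.

Definition comb j (u : 'rV[k]_(h j)) : {mpoly k[n]} :=
  \sum_(a < h j) u 0 a *: tnth (Bt j) a.

Lemma comb_homog {j} u : comb j u \is j.-homog.
Proof. by apply: rpred_sum => a _; apply: rpredZ; apply: Bt_homog. Qed.

Lemma combP j x u v : comb j (x *: u + v) = x *: comb j u + comb j v.
Proof.
rewrite /comb scaler_sumr -big_split; apply: eq_bigr => a _.
by rewrite !mxE scalerDl scalerA.
Qed.

Lemma comb0 j : comb j 0 = 0.
Proof. by rewrite /comb big1 // => a _; rewrite mxE scale0r. Qed.

Lemma combB j u v : comb j (u - v) = comb j u - comb j v.
Proof. by rewrite /comb -sumrB; apply: eq_bigr => a _; rewrite !mxE scalerBl. Qed.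

Lemma comb_inI {j u} : comb j u \in I -> u = 0.
Proof.
move=> H; apply/rowP => a; rewrite !mxE.
exact: (@Bt_indep j (fun a => u 0 a) H a).
Qed.

Lemma span j f : f \is j.-homog -> exists u, f - comb j u \in I.
Proof.
move=> Hf; apply: NNPP => Hno.
have Hind : indep_mod I [tuple of f :: Bt j].
  move=> c Hc.
  rewrite big_ord_recl tnth0 in Hc.
  rewrite (eq_bigr (fun a => c (lift ord0 a) *: tnth (Bt j) a)) in Hc; last first.
    by move=> a _; rewrite tnthS.
  have Hc0 : c ord0 = 0.
    apply: NNPP => Hc0; apply: Hno.
    exists (\row_a (- (c (lift ord0 a) / c ord0))).
    have -> : f - comb j (\row_a (- (c (lift ord0 a) / c ord0))) =
        (c ord0)^-1 *: (c ord0 *: f + \sum_a c (lift ord0 a) *: tnth (Bt j) a).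
      rewrite scalerDr scalerA mulVf ?scale1r; last by apply/eqP.
      rewrite /comb -sumrN scaler_sumr; congr (_ + _); apply: eq_bigr => a _.
      by rewrite mxE scaleNr opprK scalerA mulrC.
    exact: IZ.
  have Hrest : forall a, c (lift ord0 a) = 0.
    rewrite Hc0 scale0r add0r in Hc.
    exact: (@Bt_indep j (fun a => c (lift ord0 a)) Hc).
  by move=> i; case: (unliftP ord0 i) => [a ->|->].
have Hhom : forall i, tnth [tuple of f :: Bt j] i \is j.-homog.
  by move=> i; case: (unliftP ord0 i) => [a ->|->]; rewrite ?tnth0 ?tnthS ?Bt_homog.
by have := (proj2 (hh j)) _ _ Hhom Hind; rewrite ltnn.
Qed.

Definition coord j (f : {mpoly k[n]}) : 'rV[k]_(h j) :=
  epsilon (inhabits 0) (fun u => f - comb j u \in I).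

Lemma coordP {j f} : f \is j.-homog -> f - comb j (coord j f) \in I.
Proof. by move=> Hf; apply: (epsilon_spec (inhabits 0) (fun u => f - comb j u \in I)); apply: span. Qed.

Lemma coord_uniq {j f u} : f \is j.-homog -> f - comb j u \in I -> coord j f = u.
Proof.
move=> Hf Hu; apply/eqP; rewrite -subr_eq0; apply/eqP; apply: comb_inI.
have := IB hI Hu (coordP Hf).
by rewrite combB opprB addrC addrA subrK.
Qed.

Lemma coord_comb {j} u : coord j (comb j u) = u.
Proof. by apply: coord_uniq; [exact: comb_homog | rewrite subrr; exact: I0]. Qed.

Lemma coord0 {j f} : f \is j.-homog -> (coord j f == 0) = (f \in I).
Proof.
move=> Hf; apply/eqP/idP => [H|H].
  by have := coordP Hf; rewrite H comb0 subr0.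
by apply: coord_uniq => //; rewrite comb0 subr0.
Qed.

Lemma coordB {j f g} : f \is j.-homog -> g \is j.-homog -> f - g \in I -> coord j f = coord j g.
Proof.
move=> Hf Hg H; apply: coord_uniq => //.
have := ID hI H (coordP Hg).
by rewrite addrA subrK.
Qed.

Lemma mxmulE m p (u : 'rV[k]_m) (M : 'M[k]_(m,p)) b : (u *m M) 0 b = \sum_a u 0 a * M a b.
Proof. by rewrite mxE. Qed.

Definition Mul (g : {mpoly k[n]}) j : 'M[k]_(h j, h j.+1) :=
  \matrix_(a, b) coord j.+1 (g * tnth (Bt j) a) 0 b.

Lemma mulhomog (g : {mpoly k[n]}) j f : g \is 1.-homog -> f \is j.-homog -> g * f \is j.+1.-homog.
Proof. by move=> Hg Hf; have := dhomogM Hg Hf; rewrite add1n. Qed.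

Lemma MulE g j u : g \is 1.-homog -> u *m Mul g j = coord j.+1 (g * comb j u).
Proof.
move=> Hg; symmetry; apply: coord_uniq; first by apply: mulhomog => //; exact: comb_homog.
have E : comb j.+1 (u *m Mul g j) =
    \sum_a u 0 a *: comb j.+1 (coord j.+1 (g * tnth (Bt j) a)).
  rewrite /comb.
  under eq_bigr => b _ do rewrite mxmulE scaler_suml.
  rewrite exchange_big /=; apply: eq_bigr => a _.
  rewrite scaler_sumr; apply: eq_bigr => b _.
  by rewrite !mxE scalerA.
rewrite E /comb mulr_sumr -sumrB; apply: (Isum hI) => a _.
rewrite -scalerAr -scalerBr; apply: (IZ hI).
apply: coordP; apply: mulhomog => //; exact: Bt_homog.
Qed.


Variable c : 'I_n -> k.
Local Notation L := (linform c).
Variable s : nat.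
Hypothesis hlev : level_socle I s.

Lemma socle {j f} : f \is j.-homog -> j != s -> (forall i, 'X_i * f \in I) -> f \in I.
Proof. move=> Hf Hj H; rewrite -(hcomp_homog Hf); exact: hlev H j Hj. Qed.

Definition K j := kermx (Mul L j).
Definition kappa j := \rank (K j).

Lemma LcombH {j} u : L * comb j u \is j.+1.-homog.
Proof. apply: mulhomog; [exact: linform_homog | exact: comb_homog]. Qed.

Lemma kerP j u : (u <= K j)%MS = (L * comb j u \in I).
Proof.
rewrite -(coord0 (LcombH u)) -MulE; last exact: linform_homog.
by apply/sub_kermxP/eqP.
Qed.

Lemma kappa_ge j : (h j - h j.+1 <= kappa j)%N.
Proof. rewrite /kappa /K mxrank_ker; have := rank_leq_col (Mul L j); lia. Qed.

Lemma kappa_surj j : vanH k n I c j -> kappa j = (h j - h j.+1)%N /\ (h j.+1 <= h j)%N.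
Proof.
move=> Hv.
have Hr : \rank (Mul L j) = h j.+1.
  apply/eqP; rewrite eqn_leq rank_leq_col /=.
  rewrite -{1}(mxrank1 k (h j.+1)); apply: mxrankS; apply/row_subP => b.
  set v := row b 1%:M.
  have [g [q [Hg [Hq Ef]]]] := Hv (comb j.+1 v) (comb_homog v).
  have -> : v = coord j q *m Mul L j.
    rewrite MulE; last exact: linform_homog.
    rewrite -{1}(coord_comb v); apply: coordB; [exact: comb_homog | exact: LcombH |].
    rewrite Ef -addrA; apply: ID => //.
    rewrite -mulrBr; apply: (IM hI); exact: coordP.
  exact: submxMl.
split; first by rewrite /kappa /K mxrank_ker Hr.
by rewrite -Hr rank_leq_row.
Qed.

Lemma shift {j u} i : (u <= K j)%MS -> (coord j.+1 ('X_i * comb j u) <= K j.+1)%MS.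
Proof.
rewrite !kerP => Hu.
have HX : ('X_i : {mpoly k[n]}) \is 1.-homog by rewrite dhomogX /= mdeg1.
have Hf : 'X_i * comb j u \is j.+1.-homog by apply: mulhomog => //; exact: comb_homog.
have := coordP Hf; set w := coord _ _ => Hw.
have -> : L * comb j.+1 w = 'X_i * (L * comb j u) - L * ('X_i * comb j u - comb j.+1 w).
  by rewrite mulrBr mulrCA opprB addrC subrK.
by apply: (IB hI); [apply: (IM hI) | apply: (IM hI)].
Qed.

Lemma kappa_prop j : j != s -> (0 < kappa j)%N -> (0 < kappa j.+1)%N.
Proof.
move=> Hj; rewrite /kappa lt0n mxrank_eq0 => HK.
set u := nz_row (K j).
have Hu : (u <= K j)%MS by exact: nz_row_sub.
have Hu0 : u != 0 by rewrite nz_row_eq0.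
have Hnot : comb j u \notin I by apply: contra Hu0 => /comb_inI ->.
have : ~~ [forall i, 'X_i * comb j u \in I].
  apply: contra Hnot => /forallP H; exact: (socle (comb_homog u) Hj H).
rewrite negb_forall => /existsP [i Hi].
have HX : ('X_i : {mpoly k[n]}) \is 1.-homog by rewrite dhomogX /= mdeg1.
have Hf : 'X_i * comb j u \is j.+1.-homog by apply: mulhomog => //; exact: comb_homog.
have Hw := shift i Hu.
have Hw0 : coord j.+1 ('X_i * comb j u) != 0 by rewrite coord0.
rewrite /kappa; apply: leq_trans (mxrankS Hw); by rewrite rank_rV Hw0.
Qed.


Definition Xm j (i : 'I_n) := Mul 'X_i j.
Definition capK j (l : seq 'I_n) (U : 'M[k]_(h j)) :=
  foldr (fun i V => (V :&: kermx (Xm j i))%MS) U l.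

Lemma XH (i : 'I_n) : ('X_i : {mpoly k[n]}) \is 1.-homog.
Proof. by rewrite dhomogX /= mdeg1. Qed.

Lemma capK_sub j l U : (capK j l U <= U)%MS.
Proof. elim: l => [|i l IH] //=; exact: submx_trans (capmxSl _ _) IH. Qed.

Lemma capK_mem {j l U} {u : 'rV_(h j)} : (u <= capK j l U)%MS ->
  (u <= U)%MS /\ (forall i, i \in l -> (u <= kermx (Xm j i))%MS).
Proof.
elim: l => [|i l IH] /=; first by [].
rewrite sub_capmx => /andP [H1 H2]; have [IH1 IH2] := IH H1.
split=> // i'; rewrite in_cons => /orP [/eqP -> //|]; exact: IH2.
Qed.

Lemma chain j l U : (U <= K j)%MS ->
  (\rank U <= \rank (capK j l U) + size l * kappa j.+1)%N.
Proof.
elim: l => [|i l IH] HU /=; first by rewrite addn0.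
have := IH HU; set V := capK j l U => H0.
have HV : (V <= K j)%MS := submx_trans (capK_sub _ _ _) HU.
have H1 : (\rank (V *m Xm j i) <= kappa j.+1)%N.
  apply: mxrankS; apply/row_subP => r; rewrite row_mul /Xm MulE; last exact: XH.
  apply: shift; exact: submx_trans (row_sub r V) HV.
have := mxrank_mul_ker V (Xm j i).
rewrite mulSn; lia.
Qed.

Lemma kappa_bound j m0 : c m0 != 0 -> j != s -> (kappa j <= n.-1 * kappa j.+1)%N.
Proof.
move=> Hc Hj.
set l := rem m0 (enum 'I_n).
have := @chain j l (K j) (submx_refl (K j)).
have -> : size l = n.-1 by rewrite size_rem ?mem_enum // size_enum_ord.
suff -> : \rank (capK j l (K j)) = 0%N by [].
apply/eqP; rewrite mxrank_eq0 -submx0; apply/row_subP => r.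
set u := row r _.
have Hu : (u <= capK j l (K j))%MS := row_sub r _.
have [HuK Hker] := capK_mem Hu.
suff -> : u = 0 by rewrite sub0mx.
apply: comb_inI; apply: (socle (comb_homog u) Hj) => i.
have HLf : L * comb j u \in I by rewrite -kerP.
have Hi' : forall i, i != m0 -> 'X_i * comb j u \in I.
  move=> i' Hi'; have := Hker i'.
  rewrite (mem_rem_uniq _ (enum_uniq _)) inE Hi' mem_enum => /(_ isT) /sub_kermxP.
  rewrite /Xm MulE; last exact: XH.
  move=> /eqP; rewrite coord0 //; apply: mulhomog; [exact: XH | exact: comb_homog].
case: (eqVneq i m0) => [->|/Hi' //].
rewrite /linform mulr_suml (bigD1 m0) //= in HLf.
have HS : \sum_(i0 < n | i0 != m0) c i0 *: 'X_i0 * comb j u \in I.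
  apply: (Isum hI) => i0 Hi0; rewrite -scalerAl; apply: (IZ hI); exact: Hi'.
have := IB hI HLf HS; rewrite addrK -scalerAl => H.
have := IZ hI (c := (c m0)^-1) H; by rewrite scalerA mulVf ?scale1r.
Qed.


Lemma main_pos r1 d m0 (hd : (r1 <= d)%N) (hdrop : (h d < h d.-1)%N)
  (Hc : c m0 != 0) (Hv : vanH k n I c r1) :
  (forall t, (d.-1 <= t < s)%N -> (h t.+1 < h t)%N) /\
  (forall t, (d <= t <= s)%N ->
     (h t.-1)%:Z - (h t)%:Z <= (n%:Z - 1) * ((h t)%:Z - (h t.+1)%:Z)).
Proof.
have Hd1 : (0 < d)%N by case: d hd hdrop => //=; rewrite ltnn.
have Hsurj j : (d <= j)%N -> kappa j = (h j - h j.+1)%N /\ (h j.+1 <= h j)%N.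
  by move=> Hj; apply: kappa_surj; apply: (@vanH_up k n I hI c r1 j Hv); exact: leq_trans hd Hj.
have Hbase : (0 < kappa d.-1)%N.
  have := kappa_ge d.-1; rewrite prednK //; lia.
have Hpos : forall t, (d.-1 <= t <= s)%N -> (0 < kappa t)%N.
  elim=> [|t IH] /andP [H1 H2].
    have E : d.-1 = 0%N by lia.
    by move: Hbase; rewrite E.
  case: (eqVneq t.+1 d.-1) => [E|Hne]; first by rewrite E.
  apply: kappa_prop; first by rewrite neq_ltn H2.
  by apply: IH; apply/andP; split; lia.
split.
  move=> t /andP [H1 H2].
  case: (eqVneq t d.-1) => [->|Hne]; first by rewrite prednK.
  have Ht : (d <= t)%N by lia.
  have [E1 E2] := Hsurj t Ht.
  have := Hpos t; rewrite H1 /= ltnW // => /(_ isT); rewrite E1; lia.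
move=> t /andP [H1 H2].
have Ht0 : (0 < t)%N by lia.
have [E1 E2] := Hsurj t H1.
have Hg := kappa_ge t.-1; rewrite prednK // in Hg.
have Hts : t.-1 != s by rewrite neq_ltn; apply/orP; left; lia.
have Hb' := @kappa_bound t.-1 m0 Hc Hts; rewrite prednK // in Hb'.
have Hn : (0 < n)%N by case: m0 {Hc Hb'} => [? ?]; lia.
have -> : n%:Z - 1 = (n.-1)%:Z by lia.
have -> : (h t)%:Z - (h t.+1)%:Z = (kappa t)%:Z by lia.
rewrite -PoszM.
move: (n.-1 * kappa t)%N Hb' => P HP; lia.
Qed.


End Coord.

Section NonVanish.
Context {k : fieldType}.
Hypothesis k_inf : forall s : seq k, exists x : k, x \notin s.

Lemma uniq_seq N : exists s : seq k, uniq s /\ size s = N.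
Proof.
elim: N => [|N [s [Hu Hs]]]; first by exists [::].
have [x Hx] := k_inf s; exists (x :: s); by rewrite /= Hx Hu Hs.
Qed.

Lemma poly_nonroot (q : {poly k}) : q != 0 -> exists t, ~~ root q t.
Proof.
move=> Hq; have [s [Hu Hs]] := uniq_seq (size q).
have : ~~ all (root q) s.
  by apply/negP => Ha; have := max_poly_roots Hq Ha Hu; rewrite Hs ltnn.
by case/allPn => t _ Ht; exists t.
Qed.

Lemma digits_inj D N (a b : 'I_N -> nat) : (forall i, a i < D)%N -> (forall i, b i < D)%N ->
  (\sum_(i < N) D ^ i * a i = \sum_(i < N) D ^ i * b i)%N -> forall i, a i = b i.
Proof.
elim: N a b => [|N IH] a b Ha Hb E i; first by case: i.
have HD : (0 < D)%N by apply: leq_ltn_trans (Ha ord0).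
have split (f : 'I_N.+1 -> nat) : (\sum_(i < N.+1) D ^ i * f i = f ord0 + D * \sum_(i < N) D ^ i * f (lift ord0 i))%N.
  rewrite big_ord_recl expn0 mul1n big_distrr /=; congr (_ + _).
  by apply: eq_bigr => j _; rewrite /= /bump /= expnS mulnA.
rewrite !split in E.
have E0 : a ord0 = b ord0.
  have := congr1 (modn^~ D) E; rewrite ![(_ + D * _)%N]addnC !(mulnC D) !modnMDl.
  by rewrite !modn_small.
have E1 : (\sum_(i < N) D ^ i * a (lift ord0 i) = \sum_(i < N) D ^ i * b (lift ord0 i))%N.
  have := congr1 (divn^~ D) E; rewrite ![(_ + D * _)%N]addnC !(mulnC D) !divnMDl //.
  by rewrite !divn_small // !addn0.
have := IH _ _ (fun i => Ha (lift ord0 i)) (fun i => Hb (lift ord0 i)) E1.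
by case: (unliftP ord0 i) => [j ->|->] //; apply.
Qed.

Lemma nonvanish n (p : {mpoly k[n]}) : p != 0 ->
  exists c : 'I_n -> k, p.@[c] != 0 /\ (forall i, c i != 0).
Proof.
move=> Hp; set D := msize p.
pose enc (m : 'X_{1..n}) := (\sum_(i < n) D ^ i * m i)%N.
pose q : {poly k} := \sum_(m <- msupp p) p@_m *: 'X^(enc m).
have Hev t : q.[t] = p.@[fun i => t ^+ (D ^ i)].
  rewrite mevalE /q horner_sum; apply: eq_bigr => m _.
  rewrite hornerZ hornerXn; congr (_ * _).
  by rewrite /enc -prodrXr; apply: eq_bigr => i _; rewrite exprM.
have Hbound m i : m \in msupp p -> (m i < D)%N.
  move=> Hm; apply: leq_ltn_trans (msize_mdeg_lt Hm).
  by rewrite mdegE (bigD1 i) //= leq_addr.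
have Hq : q != 0.
  have Hm0 := mlead_supp Hp; set m0 := mlead p in Hm0.
  apply/eqP => /(congr1 (fun r : {poly k} => r`_(enc m0))).
  rewrite coef0 /q coef_sum (bigD1_seq m0) ?msupp_uniq //=.
  rewrite coefZ coefXn eqxx mulr1 big1_seq ?addr0.
    by apply/eqP; rewrite mcoeff_msupp in Hm0.
  move=> m /andP [Hne Hm]; rewrite coefZ coefXn.
  case: eqP => [E|]; last by rewrite mulr0.
  exfalso; move/negP: Hne; apply; apply/eqP/mnmP => i.
  symmetry; exact: (@digits_inj D n (fun i => m0 i) (fun i => m i) (fun i => Hbound m0 i Hm0) (fun i => Hbound m i Hm) E i).
have HqX : q * 'X != 0 by rewrite mulf_neq0 // polyX_eq0.
have [t Ht] := @poly_nonroot (q * 'X) HqX.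
have Ht' : q.[t] * t != 0 by move: Ht; rewrite /root hornerM hornerX.
exists (fun i => t ^+ (D ^ i)); split.
  by rewrite -Hev; move: Ht'; rewrite mulf_eq0 negb_or => /andP [].
by move=> i; rewrite expf_neq0 //; move: Ht'; rewrite mulf_eq0 negb_or => /andP [_].
Qed.

End NonVanish.

Theorem proposition3p4 (k : fieldType) (n : nat)
  (k_char0 : [pchar k] =i pred0)
  (k_infinite : forall s : seq k, exists x : k, x \notin s)
  (I : pred {mpoly k[n]}) (hI : homog_ideal I)
  (h : nat -> nat) (hh : forall i, hdim I i (h i))
  (s : nat) (hs_pos : (0 < h s)%N) (hs_top : forall i, (s < i)%N -> h i = 0%N)
  (hlevel : level_socle I s)
  (r1 : nat) (hr1 : is_r1 I r1)
  (d : nat) (hd : (r1 <= d)%N) (hdrop : (h d < h d.-1)%N) :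
  ((forall t, (d.-1 <= t < s)%N -> (h t.+1 < h t)%N) /\ (0 < h s)%N) /\
  (forall t, (d <= t <= s)%N ->
     (h t.-1)%:Z - (h t)%:Z <= (n%:Z - 1) * ((h t)%:Z - (h t.+1)%:Z)).
Proof.
have Hd0 : (0 < d)%N by case: d hd hdrop => //=; rewrite ltnn.
case: (posnP n) => [n0|npos].
  have Hz : forall j, j != s -> h j = 0%N.
    move=> j Hj; case: (ltngtP j s) => [Hlt|Hgt|E]; last by rewrite E eqxx in Hj.
      case E: (h j) => [//|h']; exfalso.
      have Ha : (0 < h j)%N by rewrite E.
      pose a : 'I_(h j) := Ordinal Ha.
      have Hin : forall b : 'I_(h j), tnth (Bt k n I h hh j) b \in I.
        move=> b; rewrite -(hcomp_homog (@Bt_homog k n I h hh j b)).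
        have HX : forall i : 'I_n, 'X_i * tnth (Bt k n I h hh j) b \in I.
          by move=> i; exfalso; move: (ltn_ord i); rewrite [X in (_ < X)%N]n0.
        exact: (hlevel _ HX j Hj).
      have H : \sum_(b < h j) (b == a)%:R *: tnth (Bt k n I h hh j) b \in I.
        rewrite (bigD1 a) //= scale1r big1 ?addr0 //.
        by move=> b /negbTE ->; rewrite scale0r.
      have := @Bt_indep k n I h hh j (fun b => (b == a)%:R) H a.
      by rewrite eqxx => /eqP; rewrite oner_eq0.
    exact: hs_top.
  have Hds : d.-1 = s.
    apply/eqP; apply: contraLR hdrop => /Hz ->; by rewrite ltn0.
  split; first split=> //.
    by move=> t /andP [H1 H2]; lia.
  by move=> t /andP [H1 H2]; lia.
have [P [HP HPc]] := hr1.
have [c [Hc Hcall]] := @nonvanish k k_infinite n P HP.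
have Hred := HPc c Hc.
have Hv := @vanH_base k n I hI c r1 (proj1 Hred).
have [A B] := @main_pos k n I hI h hh c s hlevel r1 d (Ordinal npos) hd hdrop (Hcall _) Hv.
by split.
Qed.
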